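(* Let $L\in\mathbb R^{N\times N}$ be symmetric positive semidefinite. For $\ell=1,\dots,c$ let $P_\ell\in\mathbb R^{N_\ell\times N_{\ell-1}}$ ($N_0=N$) have full row rank with Moore–Penrose pseudoinverse $P_\ell^+$, and define $L_0=L$, $L_\ell=(P_\ell^+)^\top L_{\ell-1}P_\ell^+$, $\Pi_\ell=P_\ell^+P_\ell$, $\Pi_\ell^\perp=I-\Pi_\ell$, $\Pi=P_1^+\cdots P_c^+P_c\cdots P_1$ and $\Pi^\perp=I-\Pi$. Fix $x\in\mathbb R^N$ and set $x_0=x$, $x_\ell=P_\ell x_{\ell-1}$. If there are $\sigma_1,\dots,\sigma_c\ge0$ with $$\|\Pi_\ell^\perp x_{\ell-1}\|_{L_{\ell-1}}\le\sigma_\ell\|x_{\ell-1}\|_{L_{\ell-1}}\quad\text{for each }\ell\le c,$$ then $$\|\Pi^\perp x\|_L\le\Big(\sum_{\ell=1}^c\sigma_\ell\prod_{q=1}^{\ell-1}(1+\sigma_q)\Big)\|x\|_L=\Big(\prod_{\ell=1}^c(1+\sigma_\ell)-1\Big)\|x\|_L.$$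
   Context: For PSD $M$, $\|y\|_M=\sqrt{y^\top My}$. *)

(* Defs.v *)
From HB Require Import structures.
From mathcomp Require Import all_boot all_order all_algebra.
Set Implicit Arguments. Unset Strict Implicit. Unset Printing Implicit Defensive.
Import Order.TTheory GRing.Theory Num.Theory.
Local Open Scope ring_scope.

Definition qform (R : rcfType) (m : nat) (M : 'M[R]_m) (y : 'cV[R]_m) : R :=
  (y^T *m M *m y) ord0 ord0.

Definition mnorm (R : rcfType) (m : nat) (M : 'M[R]_m) (y : 'cV[R]_m) : R :=
  Num.sqrt (qform M y).

Definition psd (R : rcfType) (m : nat) (M : 'M[R]_m) : Prop :=
  M^T = M /\ forall y : 'cV[R]_m, 0 <= qform M y.

Definition is_pinv (R : rcfType) (p q : nat) (A : 'M[R]_(p, q)) (B : 'M[R]_(q, p)) : Prop :=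
  [/\ A *m B *m A = A, B *m A *m B = B,
      (A *m B)^T = A *m B & (B *m A)^T = B *m A].

Section Hier.
Variables (R : rcfType) (n : nat -> nat).
(* P l is P_{l+1} : 'M_(N_{l+1}, N_l); Pp l is its pseudoinverse *)
Variables (P : forall l, 'M[R]_(n l.+1, n l)) (Pp : forall l, 'M[R]_(n l, n l.+1)).

Fixpoint Lseq (L : 'M[R]_(n 0)) (l : nat) : 'M[R]_(n l) :=
  match l with 0 => L | l'.+1 => (Pp l')^T *m Lseq L l' *m Pp l' end.

Fixpoint xseq (x : 'cV[R]_(n 0)) (l : nat) : 'cV[R]_(n l) :=
  match l with 0 => x | l'.+1 => P l' *m xseq x l' end.

Fixpoint down (l : nat) : 'M[R]_(n l, n 0) :=
  match l with 0 => 1%:M | l'.+1 => P l' *m down l' end.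

Fixpoint up (l : nat) : 'M[R]_(n 0, n l) :=
  match l with 0 => 1%:M | l'.+1 => up l' *m Pp l' end.

Definition Pi (c : nat) : 'M[R]_(n 0) := up c *m down c.
End Hier.

(* Main.v *)
Require Import Defs.
From HB Require Import structures.
From mathcomp Require Import all_boot all_order all_algebra.
From mathcomp Require Import ring lra.
Import Order.TTheory GRing.Theory Num.Theory.
Local Open Scope ring_scope.

Section Tri.
Variables (R : rcfType) (m : nat) (L : 'M[R]_m).
Hypothesis hL : psd L.

Definition bil (u v : 'cV[R]_m) : R := (u^T *m L *m v) ord0 ord0.

Lemma bilC u v : bil v u = bil u v.
Proof.
rewrite /bil.
have -> : (v^T *m L *m u) ord0 ord0 = ((v^T *m L *m u)^T) ord0 ord0.
  by rewrite [RHS]mxE.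
by rewrite !trmx_mul trmxK hL.1 mulmxA.
Qed.

Lemma bilDl u v w : bil (u + v) w = bil u w + bil v w.
Proof. by rewrite /bil linearD /= !mulmxDl mxE. Qed.

Lemma bilZl a u w : bil (a *: u) w = a * bil u w.
Proof. by rewrite /bil linearZ /= -!scalemxAl mxE. Qed.

Lemma qbil u : qform L u = bil u u.
Proof. by []. Qed.

Lemma qformD u v : qform L (u + v) = qform L u + 2 * bil u v + qform L v.
Proof.
rewrite !qbil bilDl (bilC (u+v) u) (bilC (u+v) v) !bilDl (bilC v u); ring.
Qed.

Lemma qformN u : qform L (- u) = qform L u.
Proof.
rewrite -scaleN1r qbil bilZl (bilC _ u) bilZl -qbil; ring.
Qed.

Lemma bilZr a u w : bil u (a *: w) = a * bil u w.
Proof. by rewrite bilC bilZl bilC. Qed.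

Lemma CS u v : bil u v ^+ 2 <= qform L u * qform L v.
Proof.
have H a b : 0 <= a ^+ 2 * qform L u + 2 * a * b * bil u v + b ^+ 2 * qform L v.
  have := hL.2 (a *: u + b *: v); rewrite qformD !qbil !bilZl !bilZr.
  move=> h; nra.
have h1 := H (qform L v) (- bil u v).
have h2 := H (bil u v) (- qform L u).
have h3 := H 1 1.
have h4 := H 1 (-1).
have p1 := hL.2 u. have p2 := hL.2 v.
move: h1 h2 h3 h4 p1 p2.
set X := bil u v; set Y := qform L u; set Z := qform L v => h1 h2 h3 h4 p1 p2.
have e1 : 0 <= Z * (Y * Z - X ^+ 2) by nra.
have e2 : 0 <= Y * (Y * Z - X ^+ 2) by nra.
case: (lerP (X ^+ 2) (Y * Z)) => // hlt.
have Z0 : Z = 0 by nra.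
have Y0 : Y = 0 by nra.
have X0 : X = 0 by move: h3 h4; rewrite Z0 Y0; nra.
by move: hlt; rewrite Z0 Y0 X0; lra.
Qed.


Lemma triangle u v : mnorm L (u + v) <= mnorm L u + mnorm L v.
Proof.
rewrite /mnorm.
have p1 := hL.2 u; have p2 := hL.2 v.
have s1 := sqrtr_ge0 (qform L u); have s2 := sqrtr_ge0 (qform L v).
have q1 := sqr_sqrtr p1; have q2 := sqr_sqrtr p2.
have cs := CS u v.
rewrite -(ger0_norm (addr_ge0 s1 s2)) -sqrtr_sqr ler_wsqrtr // qformD.
move: cs q1 q2 s1 s2; set X := bil u v; set Y := qform L u; set Z := qform L v;
  set a := Num.sqrt Y; set b := Num.sqrt Z => cs q1 q2 s1 s2.
have hab : X <= a * b.
  have : X ^+ 2 <= (a * b) ^+ 2 by rewrite exprMn q1 q2.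
  have ab0 : 0 <= a * b by apply: mulr_ge0.
  move: ab0; set c := a * b => ab0 h.
  case: (lerP X c) => // hlt.
  have : c * c < X * X by nra.
  by move: h; rewrite !expr2; lra.
rewrite -q1 -q2; nra.
Qed.

Lemma mnormN u : mnorm L (- u) = mnorm L u.
Proof. by rewrite /mnorm qformN. Qed.

Lemma triangleB u v : mnorm L (u - v) <= mnorm L u + mnorm L v.
Proof. by rewrite -(mnormN v); apply: triangle. Qed.

Lemma mnorm0 : mnorm L 0 = 0.
Proof. by rewrite /mnorm /qform mulmx0 mxE sqrtr0. Qed.

Lemma triangle_sum k (f : 'I_k -> 'cV[R]_m) :
  mnorm L (\sum_(i < k) f i) <= \sum_(i < k) mnorm L (f i).
Proof.
elim/big_ind2: _ => //; first by rewrite mnorm0.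
by move=> x1 x2 y1 y2 h1 h2; apply: (le_trans (triangle _ _)); apply: lerD.
Qed.
End Tri.

Section Main.
Variables (R : rcfType) (n : nat -> nat) (L : 'M[R]_(n 0%N)).
Variables (P : forall l, 'M[R]_(n l.+1, n l)) (Pp : forall l, 'M[R]_(n l, n l.+1)).

Lemma Lseq_up l : Lseq Pp L l = (up Pp l)^T *m L *m up Pp l.
Proof.
elim: l => [|l IH] /=; first by rewrite trmx1 mul1mx mulmx1.
by rewrite IH trmx_mul !mulmxA.
Qed.

Lemma mnorm_up l y : mnorm L (up Pp l *m y) = mnorm (Lseq Pp L l) y.
Proof. by rewrite /mnorm /qform Lseq_up trmx_mul !mulmxA. Qed.

Lemma down_x x l : down P l *m x = xseq P x l.
Proof. by elim: l => [|l IH] /=; rewrite ?mul1mx // -mulmxA IH. Qed.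

Lemma tele c : 1%:M - Pi P Pp c =
  \sum_(l < c) up Pp l *m (1%:M - Pp l *m P l) *m down P l.
Proof.
elim: c => [|c IH]; first by rewrite big_ord0 /Pi /= mulmx1 subrr.
rewrite big_ord_recr /= -IH /Pi /= mulmxBr mulmx1 mulmxBl !mulmxA.
by rewrite addrA subrK.
Qed.

Lemma telesum (sigma : nat -> R) c :
  \sum_(l < c) sigma l * \prod_(q < l) (1 + sigma q) = \prod_(l < c) (1 + sigma l) - 1.
Proof.
elim: c => [|c IH]; first by rewrite !big_ord0 subrr.
rewrite big_ord_recr big_ord_recr /= IH; ring.
Qed.
End Main.

Theorem lemma3 (R : rcfType) (c : nat) (n : nat -> nat)
  (L : 'M[R]_(n 0%N))
  (P : forall l, 'M[R]_(n l.+1, n l)) (Pp : forall l, 'M[R]_(n l, n l.+1))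
  (x : 'cV[R]_(n 0%N)) (sigma : nat -> R) :
  psd L ->
  (forall l, (l < c)%N -> row_free (P l)) ->
  (forall l, (l < c)%N -> is_pinv (P l) (Pp l)) ->
  (forall l, (l < c)%N -> 0 <= sigma l) ->
  (forall l, (l < c)%N ->
     mnorm (Lseq Pp L l) ((1%:M - Pp l *m P l) *m xseq P x l)
       <= sigma l * mnorm (Lseq Pp L l) (xseq P x l)) ->
  mnorm L ((1%:M - Pi P Pp c) *m x)
    <= (\sum_(l < c) sigma l * \prod_(q < l) (1 + sigma q)) * mnorm L x
  /\ \sum_(l < c) sigma l * \prod_(q < l) (1 + sigma q)
     = \prod_(l < c) (1 + sigma l) - 1.
Proof.
move=> hL _ _ hs hb; split; last exact: telesum.
have growth l : (l <= c)%N ->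
    mnorm (Lseq Pp L l) (xseq P x l) <= (\prod_(q < l) (1 + sigma q)) * mnorm L x.
  elim: l => [|l IH] hl; first by rewrite big_ord0 mul1r.
  have hlc : (l < c)%N by [].
  have IH' := IH (ltnW hlc).
  rewrite -mnorm_up big_ord_recr /=.
  have -> : up Pp l *m Pp l *m (P l *m xseq P x l) =
      up Pp l *m xseq P x l - up Pp l *m ((1%:M - Pp l *m P l) *m xseq P x l).
    by rewrite mulmxBl mul1mx mulmxBr subKr !mulmxA.
  have T := @triangleB _ _ _ hL (up Pp l *m xseq P x l) (up Pp l *m ((1%:M - Pp l *m P l) *m xseq P x l)).
  apply: (le_trans T); rewrite !mnorm_up.
  have h1 := hb l hlc. have h0 := hs l hlc.
  move: IH' h1; set A := mnorm _ (xseq P x l); set B := \prod_(_ < _) _ * _.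
  move=> IH' h1.
  rewrite -mulrA.
  have : (1 + sigma l) * A <= (1 + sigma l) * B by apply: ler_wpM2l => //; lra.
  have -> : \prod_(i < l) (1 + sigma i) * ((1 + sigma l) * mnorm L x) = (1 + sigma l) * B.
    by rewrite /B; ring.
  lra.
rewrite tele mulmx_suml.
apply: (le_trans (@triangle_sum _ _ _ hL _ _)).
rewrite mulr_suml; apply: ler_sum => i _.
rewrite -mulmxA down_x -mulmxA mnorm_up.
apply: (le_trans (hb i (ltn_ord i))).
rewrite -mulrA; apply: ler_wpM2l; first exact: hs.
exact: growth (ltnW (ltn_ord i)).
Qed.
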